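(* In a pre-Hilbert $*$-category, a morphism $a\colon A\to A$ satisfies $a\succ 0$ if and only if $a=x^*x$ for some object $X$ and some isomorphism $x\colon A\to X$.
   Context: A $*$-category is a category with a choice of $f^*\colon Y\to X$ for each $f\colon X\to Y$ such that $1^*=1$, $(gf)^*=f^*g^*$, $(f^* )^*=f$. A pre-Hilbert $*$-category is a $*$-category with (R1) a zero object, (R2) orthonormal biproducts of all pairs of objects (biproducts $(X,s_1,r_1,s_2,r_2)$ with $r_k=s_k^*$), (R3) an isometric kernel (kernel $m$ with $m^*m=1$) for every morphism, and (R4) every diagonal $\Delta\colon X\to X\oplus X$ a kernel of some morphism; such a category is additive. For a Hermitian endomorphism $a$ ($a^*=a$) of $A$, $a\geq 0$ means $a=y^*y$ for some object $Y$ and $y\colon A\to Y$, and $a\succ 0$ means $a\geq 0$ and $a$ is invertible. *)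

(* Defs.v *)
Set Implicit Arguments.
Unset Strict Implicit.

(* A *-category. [comp g f] is g ∘ f. Hom-sets are types, equality is Leibniz. *)
Record StarCat := {
  ob :> Type;
  hom : ob -> ob -> Type;
  idm : forall X : ob, hom X X;
  comp : forall X Y Z : ob, hom Y Z -> hom X Y -> hom X Z;
  star : forall X Y : ob, hom X Y -> hom Y X;
  comp_assoc : forall (W X Y Z : ob) (h : hom Y Z) (g : hom X Y) (f : hom W X),
      comp h (comp g f) = comp (comp h g) f;
  comp_id_l : forall (X Y : ob) (f : hom X Y), comp (idm Y) f = f;
  comp_id_r : forall (X Y : ob) (f : hom X Y), comp f (idm X) = f;
  star_id : forall X : ob, star (idm X) = idm X;
  star_comp : forall (X Y Z : ob) (g : hom Y Z) (f : hom X Y),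
      star (comp g f) = comp (star f) (star g);
  star_star : forall (X Y : ob) (f : hom X Y), star (star f) = f
}.

Arguments hom {s} _ _.
Arguments idm {s} _.
Arguments comp {s X Y Z} _ _.
Arguments star {s X Y} _.

Section Defs.
Variable C : StarCat.

Definition is_zero_object (Z : C) : Prop :=
  forall X : C, (exists! f : hom X Z, True) /\ (exists! f : hom Z X, True).

Definition is_zero_mor {X Y : C} (f : hom X Y) : Prop :=
  exists (Z : C) (g : hom X Z) (h : hom Z Y), is_zero_object Z /\ f = comp h g.

Definition is_biproduct (X Y P : C) (s1 : hom X P) (r1 : hom P X)
    (s2 : hom Y P) (r2 : hom P Y) : Prop :=
  comp r1 s1 = idm X /\ comp r2 s2 = idm Y /\
  is_zero_mor (comp r2 s1) /\ is_zero_mor (comp r1 s2) /\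
  (forall (W : C) (f : hom W X) (g : hom W Y),
      exists! h : hom W P, comp r1 h = f /\ comp r2 h = g) /\
  (forall (W : C) (f : hom X W) (g : hom Y W),
      exists! h : hom P W, comp h s1 = f /\ comp h s2 = g).

Definition is_orthonormal_biproduct (X Y P : C) (s1 : hom X P) (r1 : hom P X)
    (s2 : hom Y P) (r2 : hom P Y) : Prop :=
  is_biproduct s1 r1 s2 r2 /\ r1 = star s1 /\ r2 = star s2.

Definition is_kernel {K X Y : C} (f : hom X Y) (m : hom K X) : Prop :=
  is_zero_mor (comp f m) /\
  forall (W : C) (g : hom W X), is_zero_mor (comp f g) ->
    exists! h : hom W K, comp m h = g.

Definition is_isometry {X Y : C} (m : hom X Y) : Prop := comp (star m) m = idm X.

Definition is_iso {X Y : C} (x : hom X Y) : Prop :=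
  exists y : hom Y X, comp y x = idm X /\ comp x y = idm Y.

Definition hermitian {A : C} (a : hom A A) : Prop := star a = a.

Definition pos {A : C} (a : hom A A) : Prop :=
  hermitian a /\ exists (Y : C) (y : hom A Y), a = comp (star y) y.

Definition strictly_pos {A : C} (a : hom A A) : Prop := pos a /\ is_iso a.

End Defs.

Record PreHilbertStarCat := {
  phcat :> StarCat;
  R1_zero : exists Z : phcat, is_zero_object Z;
  R2_biproducts : forall X Y : phcat, exists (P : phcat) (s1 : hom X P) (r1 : hom P X)
      (s2 : hom Y P) (r2 : hom P Y), is_orthonormal_biproduct s1 r1 s2 r2;
  R3_kernels : forall (X Y : phcat) (f : hom X Y),
      exists (K : phcat) (m : hom K X), is_kernel f m /\ is_isometry m;
  R4_diagonals : forall (X P : phcat) (s1 : hom X P) (r1 : hom P X)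
      (s2 : hom X P) (r2 : hom P X),
      is_orthonormal_biproduct s1 r1 s2 r2 ->
      forall d : hom X P, comp r1 d = idm X -> comp r2 d = idm X ->
      exists (Z : phcat) (g : hom P Z), is_kernel g d
}.

(* Main.v *)
Require Import Defs.

Section H.
Variable C : StarCat.

Lemma zero_comp_r (X Y W : C) (f : hom X Y) (h : hom W X) :
  is_zero_mor f -> is_zero_mor (comp f h).
Proof.
  intros [Z [g [k [HZ ->]]]]. exists Z, (comp g h), k. split; auto.
  now rewrite comp_assoc.
Qed.

Lemma iso_mono (X Y W : C) (m : hom X Y) (p q : hom W X) :
  is_isometry m -> comp m p = comp m q -> p = q.
Proof.
  intros Hm E. rewrite <- (comp_id_l p), <- (comp_id_l q).
  unfold is_isometry in Hm. rewrite <- Hm, <- !comp_assoc, E. reflexivity.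
Qed.
End H.

Theorem proposition6p3 (C : PreHilbertStarCat) (A : C) (a : hom A A) :
  strictly_pos a <-> exists (X : C) (x : hom A X), is_iso x /\ a = comp (star x) x.
Proof.
  split.
  - intros [[_ [Y [y Ha]]] [b [Hba Hab]]].
    set (r := comp b (star y)).
    assert (Hry : comp r y = idm A).
    { unfold r. rewrite <- comp_assoc, <- Ha. exact Hba. }
    set (e := comp y r).
    destruct (R2_biproducts (p:=C) Y Y) as [P [s1 [r1 [s2 [r2 HB]]]]].
    pose proof HB as HB'.
    destruct HB' as [[_ [_ [_ [_ [Hprod _]]]]] _].
    destruct (Hprod Y (idm Y) e) as [u [[Hu1 Hu2] _]].
    destruct (Hprod Y (idm Y) (idm Y)) as [d [[Hd1 Hd2] _]].
    destruct (R4_diagonals HB Hd1 Hd2) as [Z [g [Hgd0 Hgd]]].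
    destruct (R3_kernels (comp g u)) as [K [m [[Hfm0 Hfm] Hmi]]].
    assert (Huy : comp u y = comp d y).
    { destruct (Hprod A y y) as [w [_ Hw]].
      transitivity w; [symmetry|]; apply Hw; split;
        rewrite comp_assoc; try rewrite Hu1; try rewrite Hu2;
        try rewrite Hd1; try rewrite Hd2; rewrite ?comp_id_l; try reflexivity.
      unfold e. rewrite <- comp_assoc, Hry, comp_id_r. reflexivity. }
    assert (Hz : is_zero_mor (comp (comp g u) y)).
    { rewrite <- comp_assoc, Huy, comp_assoc. apply zero_comp_r. exact Hgd0. }
    destruct (Hfm A y Hz) as [x [Hmx _]].
    assert (Hem : comp e m = m).
    { assert (Hz2 : is_zero_mor (comp g (comp u m))) by (rewrite comp_assoc; exact Hfm0).
      destruct (Hgd K (comp u m) Hz2) as [h [Hh _]].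
      assert (E1 : h = m).
      { rewrite <- (comp_id_l h), <- Hd1, <- comp_assoc, Hh, comp_assoc, Hu1, comp_id_l.
        reflexivity. }
      assert (E2 : h = comp e m).
      { rewrite <- (comp_id_l h), <- Hd2, <- comp_assoc, Hh, comp_assoc, Hu2.
        reflexivity. }
      congruence. }
    exists K, x. split.
    + exists (comp r m). split.
      * rewrite <- comp_assoc, Hmx. exact Hry.
      * apply (@iso_mono _ _ _ _ m); auto.
        rewrite !comp_assoc, Hmx, comp_id_r. exact Hem.
    + rewrite Ha, <- Hmx, star_comp, <- comp_assoc, (comp_assoc (star m)).
      unfold is_isometry in Hmi. rewrite Hmi, comp_id_l. reflexivity.
  - intros [X [x [[y [Hyx Hxy]] ->]]].
    split; [split|].
    + unfold hermitian. rewrite star_comp, star_star. reflexivity.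
    + exists X, x. reflexivity.
    + exists (comp y (star y)). split.
      * rewrite <- comp_assoc, (comp_assoc (star y)), <- star_comp, Hxy, star_id,
          comp_id_l. exact Hyx.
      * rewrite <- comp_assoc, (comp_assoc x), Hxy, comp_id_l, <- star_comp, Hyx.
        apply star_id.
Qed.
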